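(* Let $G$ be a finite group, $k$ a field of characteristic $p$ dividing $|G|$. The constant presheaf $\underline{k^{\times}}$ on $\mathcal{O}(G)$ is a sheaf on the site $(\mathcal{O}(G),\mathcal{J}_{\rm sipp})$.
   Context: $\mathcal{O}(G)$ is the category of orbits $G/H$ ($H\le G$) and $G$-maps. $k^\times$ is the multiplicative group of $k$, and $\underline{k^\times}$ the constant presheaf with all restriction maps the identity. A sieve on $x$ is a set of morphisms with codomain $x$ closed under precomposition. $\mathcal{J}_{\rm sipp}$: a sieve on $G/H$ is covering iff it contains the projection $G/P_H\to G/H$, $gP_H\mapsto gH$, for a Sylow $p$-subgroup $P_H$ of $H$. A presheaf $\mathfrak{F}$ is a sheaf if for every covering sieve $S$ on $x$ the restriction map $\mathrm{Nat}(\mathrm{Hom}(-,x),\mathfrak{F})\to\mathrm{Nat}(S,\mathfrak{F})$ is bijective. *)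

(* Defs.v *)
From HB Require Import structures.
From mathcomp Require Import all_boot all_algebra all_fingroup all_solvable.

Set Implicit Arguments.
Unset Strict Implicit.
Unset Printing Implicit Defensive.

Local Open Scope group_scope.

(* Orbit category O(G): the object G/H (H a subgroup of G) is the set of left
   cosets [lcosets H G] = {x *: H | x in G}.  A morphism G/H -> G/K is a G-map,
   represented canonically as a finite function on {set gT} that is a
   G-equivariant map lcosets H G -> lcosets K G and sends every other set to
   set0 (so that equality of morphisms is equality of the maps on G/H). *)
Definition morph (gT : finGroupType) := {ffun {set gT} -> {set gT}}.

Definition is_Gmap (gT : finGroupType) (G H K : {set gT}) (f : morph gT) : Prop :=
  [/\ forall C, C \notin lcosets H G -> f C = set0,
      forall C, C \in lcosets H G -> f C \in lcosets K G &
      forall g C, g \in G -> C \in lcosets H G -> f (g *: C) = g *: f C].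

Definition mcomp (gT : finGroupType) (f u : morph gT) : morph gT :=
  [ffun C => f (u C)].

(* presheaves of sets on O(G) (only the data needed for the sheaf condition) *)
Record presheaf (gT : finGroupType) := Presheaf {
  psh_ob : {group gT} -> Type;
  psh_mor : forall H K : {group gT}, morph gT -> psh_ob K -> psh_ob H }.

Definition const_psh (gT : finGroupType) (A : Type) : presheaf gT :=
  @Presheaf gT (fun _ => A) (fun _ _ _ a => a).

Definition kunits (k : fieldType) := {x : k | x != 0%R}.

(* A sieve on x = G/X: a set of morphisms with codomain x closed under
   precomposition.  S y f means the morphism f : G/y -> G/X is in S. *)
Definition sieve (gT : finGroupType) (G X : {group gT})
    (S : {group gT} -> morph gT -> Prop) : Prop :=
  (forall (y : {group gT}) f, S y f -> y \subset G /\ is_Gmap G y X f) /\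
  (forall (y z : {group gT}) f u, S y f -> z \subset G -> is_Gmap G z y u ->
      S z (mcomp f u)).

(* the maximal sieve = the representable functor Hom(-, x) *)
Definition maxsieve (gT : finGroupType) (G X : {group gT}) :
    {group gT} -> morph gT -> Prop :=
  fun y f => y \subset G /\ is_Gmap G y X f.

Definition natS (gT : finGroupType) (G : {group gT}) (F : presheaf gT)
    (S : {group gT} -> morph gT -> Prop)
    (alpha : forall y : {group gT}, morph gT -> psh_ob F y) : Prop :=
  forall (y z : {group gT}) f u, S y f -> z \subset G -> is_Gmap G z y u ->
    alpha z (mcomp f u) = @psh_mor gT F z y u (alpha y f).

(* restriction Nat(Hom(-,x),F) -> Nat(S,F) is bijective (natural
   transformations being equal iff they agree on every morphism of the
   domain sieve) *)
Definition sheaf_cond (gT : finGroupType) (G X : {group gT}) (F : presheaf gT)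
    (S : {group gT} -> morph gT -> Prop) : Prop :=
  (forall alpha beta, @natS gT G F (maxsieve G X) alpha -> @natS gT G F (maxsieve G X) beta ->
     (forall y f, S y f -> alpha y f = beta y f) ->
     forall y f, maxsieve G X y f -> alpha y f = beta y f) /\
  (forall beta, @natS gT G F S beta ->
     exists alpha, @natS gT G F (maxsieve G X) alpha /\
       forall y f, S y f -> alpha y f = beta y f).

Definition sipp_proj (gT : finGroupType) (G P H : {set gT}) : morph gT :=
  [ffun C => if C \in lcosets P G then C * H else set0].

Definition Jsipp (gT : finGroupType) (p : nat) (G X : {group gT})
    (S : {group gT} -> morph gT -> Prop) : Prop :=
  exists P : {group gT}, P \in 'Syl_p(X) /\ S P (sipp_proj G P X).

Definition is_sheaf_sipp (gT : finGroupType) (p : nat) (G : {group gT})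
    (F : presheaf gT) : Prop :=
  forall X : {group gT}, X \subset G ->
  forall S, sieve G X S -> Jsipp p G X S -> @sheaf_cond gT G X F S.

(* Main.v *)
Require Import Defs.
From HB Require Import structures.
From mathcomp Require Import all_boot all_algebra all_fingroup all_solvable.

Set Implicit Arguments.
Unset Strict Implicit.
Unset Printing Implicit Defensive.
Local Open Scope group_scope.

Section Aux.
Variables (gT : finGroupType) (G : {group gT}).

Definition trm (H : {set gT}) (c : gT) : morph gT :=
  [ffun C => if C \in lcosets [1 gT] G then C * (c *: H) else set0].

Definition Em (X : {set gT}) : morph gT :=
  [ffun C => if C \in lcosets [1 gT] G then C * X else set0].

Lemma set0_notin (H : {group gT}) : set0 \notin lcosets H G.
Proof.
apply/negP => /lcosetsP [a _ Ha].
by have := lcoset_refl H a; rewrite -Ha inE.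
Qed.

Lemma trm_Gmap (y : {group gT}) c : c \in G -> is_Gmap G [1 gT] y (trm y c).
Proof.
move=> Gc; split.
- by move=> C /negbTE HC; rewrite ffunE HC.
- move=> C HC; rewrite ffunE HC; case/lcosetsP: HC => x Gx ->.
  rewrite mulg1 -lcosetM; apply/lcosetsP; exists (x * c) => //; exact: groupM.
- move=> g C Gg HC.
  have HgC : g *: C \in lcosets [1 gT] G.
    case/lcosetsP: HC => x Gx ->; apply/lcosetsP; exists (g * x).
      exact: groupM.
    by rewrite lcosetM.
  by rewrite !ffunE HC HgC; apply: esym; apply: set_mulgA.
Qed.

Lemma key (X y : {group gT}) f : y \subset G -> is_Gmap G y X f ->
  exists c, c \in G /\ mcomp f (trm y c) = Em X.
Proof.
move=> syG [f0 f1 f2].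
have yin : (y : {set gT}) \in lcosets y G.
  by apply/lcosetsP; exists 1; rewrite ?group1 ?lcoset1.
case/lcosetsP: (f1 _ yin) => a Ga Ha.
exists a^-1; split; first by rewrite groupV.
apply/ffunP => C; rewrite !ffunE.
case HC: (C \in lcosets [1 gT] G); last by rewrite f0 // set0_notin.
case/lcosetsP: HC => x Gx ->.
rewrite !mulg1 -lcosetM f2 ?groupM ?groupV // Ha -!lcosetM.
by rewrite mulgKV.
Qed.

Lemma const_E (A : Type) (X : {group gT}) T beta :
  @natS gT G (const_psh gT A) T beta ->
  forall (y : {group gT}) f, T y f -> y \subset G -> is_Gmap G y X f ->
  beta y f = beta [1 gT]%G (Em X).
Proof.
move=> nat y f Tf syG Gf.
have [c [Gc E]] := key syG Gf.
by rewrite -E (nat y [1 gT]%G f (trm y c) Tf (sub1G G) (trm_Gmap y Gc)).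
Qed.

End Aux.

Theorem proposition4p2p1 (gT : finGroupType) (G : {group gT}) (k : fieldType)
    (p : nat) :
  p \in [pchar k]%R -> p %| #|G| ->
  is_sheaf_sipp p G (const_psh gT (kunits k)).
Proof.
move=> _ _ X sXG S [Ssub Sclos] [P [_ SP]].
have [sPG GP] := Ssub _ _ SP.
split.
- move=> alpha beta na nb agr y f [syG Gf].
  rewrite (const_E na (conj syG Gf) syG Gf) (const_E nb (conj syG Gf) syG Gf).
  rewrite -(const_E na (conj sPG GP) sPG GP) -(const_E nb (conj sPG GP) sPG GP).
  exact: (agr _ _ SP).
- move=> beta nb; exists (fun _ _ => beta P (sipp_proj G P X)); split.
    by [].
  move=> y f Sf; have [syG Gf] := Ssub _ _ Sf.
  by rewrite (const_E nb Sf syG Gf) (const_E nb SP sPG GP).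
Qed.
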